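(* Let $\mu=\delta\mu'+(1-\delta)\nu$ where $\mu',\nu$ are distributions on $\Sigma\times\Gamma\times\Phi$ and $\delta\in(0,1]$, and let $t:\mathsf{supp}(\mu)\to\mathcal{A}$ ($\mathcal{A}$ a finite Abelian group). Let $\mathcal{G}_\mu$ be the $3$-player $\mathsf{XOR}$ game with question distribution $\mu$ and target $t$, and $\mathcal{G}_{\mu'}$ the game with the same target and question distribution $\mu'$. Then $$\mathsf{val}(\mathcal{G}_\mu^{\otimes n})\le\mathsf{val}(\mathcal{G}_{\mu'}^{\otimes \delta n/2})+2^{-\Omega(\delta n)}.$$
   Context: In a $3$-player $\mathsf{XOR}$ game with distribution $\mu$ and target $t$, the $n$-fold repeated value is $\max_{f,g,h}\Pr_{(x,y,z)\sim\mu^{\otimes n}}[f(x)_i+g(y)_i+h(z)_i=t(x_i,y_i,z_i)\ \forall i\in[n]]$ over $f:\Sigma^n\to\mathcal{A}^n$, $g:\Gamma^n\to\mathcal{A}^n$, $h:\Phi^n\to\mathcal{A}^n$. The $\Omega(\cdot)$ hides an absolute constant. *)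

(* Defs.v *)
From HB Require Import structures.
From mathcomp Require Import all_boot all_order all_algebra.
From mathcomp Require Import all_classical all_reals all_analysis.
Set Implicit Arguments. Unset Strict Implicit. Unset Printing Implicit Defensive.
Import Order.TTheory GRing.Theory Num.Theory.
Local Open Scope ring_scope.

Definition is_distr (R : realType) (T : finType) (p : {ffun T -> R}) : Prop :=
  (forall x, 0 <= p x) /\ \sum_(x : T) p x = 1.

Section XorGame.
Variables (R : realType) (S G P : finType) (A : finZmodType).

Definition xor_win_prob (mu : {ffun S * G * P -> R}) (t : S * G * P -> A) (n : nat)
  (f : {ffun n.-tuple S -> n.-tuple A}) (g : {ffun n.-tuple G -> n.-tuple A})
  (h : {ffun n.-tuple P -> n.-tuple A}) : R :=
  \sum_(q : n.-tuple (S * G * P))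
     (\prod_(i < n) mu (tnth q i)) *
     ([forall i : 'I_n,
         tnth (f (map_tuple (fun z => z.1.1) q)) i
       + tnth (g (map_tuple (fun z => z.1.2) q)) i
       + tnth (h (map_tuple (fun z => z.2) q)) i == t (tnth q i)])%:R.

Definition xor_val (mu : {ffun S * G * P -> R}) (t : S * G * P -> A) (n : nat) : R :=
  \big[Num.max/0]_(f : {ffun n.-tuple S -> n.-tuple A})
   \big[Num.max/0]_(g : {ffun n.-tuple G -> n.-tuple A})
    \big[Num.max/0]_(h : {ffun n.-tuple P -> n.-tuple A})
      xor_win_prob mu t f g h.
End XorGame.

(* Main.v *)
Require Import Defs.
From HB Require Import structures.
From mathcomp Require Import all_boot all_order all_algebra.
From mathcomp Require Import all_classical all_reals all_analysis.
From mathcomp Require Import lra zify.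
Import Order.TTheory GRing.Theory Num.Theory.
Local Open Scope ring_scope.

Set Implicit Arguments. Unset Strict Implicit.
Section Tup.
Variable T : Type.

Definition tins n (i0 : 'I_n.+1) (x : T) (q : n.-tuple T) : n.+1.-tuple T :=
  [tuple match unlift i0 k with Some j => tnth q j | None => x end | k < n.+1].
Definition tdel n (i0 : 'I_n.+1) (q : n.+1.-tuple T) : n.-tuple T :=
  [tuple tnth q (lift i0 j) | j < n].

Lemma tnth_ins0 n (i0 : 'I_n.+1) (x : T) (q : n.-tuple T) : tnth (tins i0 x q) i0 = x.
Proof. by rewrite tnth_mktuple unlift_none. Qed.

Lemma tnth_insl n (i0 : 'I_n.+1) (x : T) (q : n.-tuple T) j : tnth (tins i0 x q) (lift i0 j) = tnth q j.
Proof. by rewrite tnth_mktuple liftK. Qed.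

Lemma tdel_ins n (i0 : 'I_n.+1) (x : T) (q : n.-tuple T) : tdel i0 (tins i0 x q) = q.
Proof. by apply: eq_from_tnth => j; rewrite tnth_mktuple tnth_insl. Qed.

Lemma tins_del n (i0 : 'I_n.+1) (q : n.+1.-tuple T) : tins i0 (tnth q i0) (tdel i0 q) = q.
Proof.
apply: eq_from_tnth => k; case: (unliftP i0 k) => [j ->|->].
  by rewrite tnth_insl tnth_mktuple.
by rewrite tnth_ins0.
Qed.
End Tup.

Lemma map_tins (T U : Type) (phi : T -> U) n (i0 : 'I_n.+1) (x : T) (q : n.-tuple T) :
  map_tuple phi (tins i0 x q) = tins i0 (phi x) (map_tuple phi q).
Proof.
apply: eq_from_tnth => k; rewrite tnth_map; case: (unliftP i0 k) => [j ->|->].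
  by rewrite !tnth_insl tnth_map.
by rewrite !tnth_ins0.
Qed.

Lemma sum_ins (R : realType) (T : finType) n (i0 : 'I_n.+1) (F : n.+1.-tuple T -> R) :
  \sum_(q : n.+1.-tuple T) F q = \sum_(x : T) \sum_(q : n.-tuple T) F (tins i0 x q).
Proof.
rewrite pair_big /=.
rewrite (reindex (fun p : T * n.-tuple T => tins i0 p.1 p.2)) /=.
  by apply: eq_bigl.
exists (fun q => (tnth q i0, tdel i0 q)) => [[x q] _|q _] /=.
  by rewrite tnth_ins0 tdel_ins.
by rewrite tins_del.
Qed.

Lemma prod_ins (R : realType) (T : finType) n (i0 : 'I_n.+1) (w : 'I_n.+1 -> T -> R) (x : T) (q : n.-tuple T) :
  \prod_(k < n.+1) w k (tnth (tins i0 x q) k) = w i0 x * \prod_(j < n) w (lift i0 j) (tnth q j).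
Proof.
rewrite (bigD1_ord i0) //= tnth_ins0; congr (_ * _).
by apply: eq_bigr => j _; rewrite tnth_insl.
Qed.
Section Game.
Variables (R : realType) (S G P : finType) (A : finZmodType) (t : S * G * P -> A).
Local Notation X := (S * G * P)%type.

Definition win n (f : {ffun n.-tuple S -> n.-tuple A}) (g : {ffun n.-tuple G -> n.-tuple A})
  (h : {ffun n.-tuple P -> n.-tuple A}) (q : n.-tuple X) (i : 'I_n) : bool :=
  tnth (f (map_tuple (fun z => z.1.1) q)) i
       + tnth (g (map_tuple (fun z => z.1.2) q)) i
       + tnth (h (map_tuple (fun z => z.2) q)) i == t (tnth q i).

Definition gwin n (w : 'I_n -> {ffun X -> R}) (U : {set 'I_n}) f g h :=
  \sum_(q : n.-tuple X) (\prod_(i < n) w i (tnth q i)) *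
     ([forall i, (i \in U) ==> win f g h q i])%:R.

Lemma gwin_ins n (w : 'I_n.+1 -> {ffun X -> R}) (U : {set 'I_n.+1}) (i0 : 'I_n.+1) f g h :
  i0 \notin U ->
  gwin w U f g h = \sum_(x : X) w i0 x *
     gwin (fun j => w (lift i0 j)) [set j | lift i0 j \in U]
       [ffun s => tdel i0 (f (tins i0 x.1.1 s))]
       [ffun s => tdel i0 (g (tins i0 x.1.2 s))]
       [ffun s => tdel i0 (h (tins i0 x.2 s))].
Proof.
move=> ni0; rewrite /gwin (sum_ins i0); apply: eq_bigr => x _.
rewrite mulr_sumr; apply: eq_bigr => q _.
rewrite (prod_ins i0 (fun k => w k)) -mulrA; congr (_ * (_ * _%:R)).
have E : forall j, win f g h (tins i0 x q) (lift i0 j) =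
   win [ffun s => tdel i0 (f (tins i0 x.1.1 s))]
       [ffun s => tdel i0 (g (tins i0 x.1.2 s))]
       [ffun s => tdel i0 (h (tins i0 x.2 s))] q j.
  move=> j; rewrite /win !ffunE !tnth_mktuple !map_tins.
  by rewrite liftK.
congr nat_of_bool; apply/idP/idP => /forallP H; apply/forallP => j.
  by rewrite inE -E; exact: H.
case: (unliftP i0 j) => [k ->|->].
  by rewrite E; move: (H k); rewrite inE.
by rewrite (negbTE ni0).
Qed.

Lemma card_lift n (i0 : 'I_n.+1) (U : {set 'I_n.+1}) :
  i0 \notin U -> #|[set j | lift i0 j \in U]| = #|U|.
Proof.
move=> ni0; rewrite -(card_imset _ (@lift_inj _ i0)); apply: eq_card => k; case: (unliftP i0 k) => [j ->|->].
  by rewrite mem_imset ?inE //; exact: lift_inj.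
rewrite (negbTE ni0); apply/imsetP => -[j _] E; move: (neq_lift i0 j); by rewrite -E eqxx.
Qed.

Lemma gwin_mono n (w : 'I_n -> {ffun X -> R}) (U U' : {set 'I_n}) f g h :
  (forall i, is_distr (w i)) -> U' \subset U -> gwin w U f g h <= gwin w U' f g h.
Proof.
move=> Hw sub; apply: ler_sum => q _; apply: ler_wpM2l.
  by apply: prodr_ge0 => i _; exact: (Hw i).1.
have: [forall i, (i \in U) ==> win f g h q i] ==> [forall i, (i \in U') ==> win f g h q i].
  apply/implyP => /forallP H; apply/forallP => i; apply/implyP => iU'.
  by move: (H i); rewrite (fintype.subsetP sub i iU').
by move: ([forall _, _]) ([forall _, _]) => [] [].
Qed.

Lemma sum_prod_distr n (w : 'I_n -> {ffun X -> R}) :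
  (forall i, is_distr (w i)) -> \sum_(q : n.-tuple X) \prod_(i < n) w i (tnth q i) = 1.
Proof.
elim: n w => [|n IH] w Hw.
  rewrite (eq_bigr (fun _ => 1)) => [|q _]; last by rewrite big_ord0.
  by rewrite sumr_const card_tuple expn0.
rewrite (sum_ins ord0); transitivity (\sum_x w ord0 x); last exact: (Hw ord0).2.
apply: eq_bigr => x _.
rewrite (eq_bigr (fun q => w ord0 x * \prod_(j < n) w (lift ord0 j) (tnth q j))).
  by rewrite -mulr_sumr IH ?mulr1 // => j; exact: Hw.
by move=> q _; exact: (prod_ins ord0 (fun k => w k)).
Qed.

Lemma gwin_le1 n (w : 'I_n -> {ffun X -> R}) (U : {set 'I_n}) f g h :
  (forall i, is_distr (w i)) -> gwin w U f g h <= 1.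
Proof.
move=> Hw; rewrite -(sum_prod_distr Hw); apply: ler_sum => q _.
rewrite -[leRHS]mulr1; apply: ler_wpM2l.
  by apply: prodr_ge0 => i _; exact: (Hw i).1.
by case: [forall _, _].
Qed.

Lemma bigmax_ge (I : finType) (F : I -> R) x0 i : F i <= \big[Num.max/x0]_(j : I) F j.
Proof. by rewrite (bigD1 i) //= le_max lexx. Qed.

Lemma bigmax_ge0 (I : finType) (F : I -> R) x0 : x0 <= \big[Num.max/x0]_(j : I) F j.
Proof. by elim/big_rec: _ => // i x _ Hx; rewrite le_max Hx orbT. Qed.

Lemma bigmax_le (I : finType) (F : I -> R) x0 B :
  x0 <= B -> (forall i, F i <= B) -> \big[Num.max/x0]_(j : I) F j <= B.
Proof. by move=> H0 HF; elim/big_rec: _ => // i x _ Hx; rewrite ge_max HF Hx. Qed.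

Lemma win_le_val (mu : {ffun X -> R}) n (f : {ffun n.-tuple S -> n.-tuple A})
  (g : {ffun n.-tuple G -> n.-tuple A}) (h : {ffun n.-tuple P -> n.-tuple A}) :
  xor_win_prob mu t f g h <= xor_val mu t n.
Proof.
apply: le_trans (bigmax_ge _ _ f).
apply: le_trans (bigmax_ge (fun g => \big[Num.max/0]_h0 xor_win_prob mu t f g h0) _ g).
exact: (bigmax_ge (fun h0 => xor_win_prob mu t f g h0)).
Qed.

Lemma gwin_base (mu' : {ffun X -> R}) n (w : 'I_n -> {ffun X -> R}) (U : {set 'I_n}) f g h :
  (n <= #|U|)%N -> (forall i, i \in U -> w i = mu') -> gwin w U f g h <= xor_val mu' t n.
Proof.
move=> HU Hw.
have UT : U = finset.setT.
  apply/eqP; rewrite eqEcard finset.subsetT cardsT card_ord; exact: HU.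
apply: le_trans (win_le_val mu' f g h); rewrite le_eqVlt; apply/orP; left; apply/eqP.
apply: eq_bigr => q _; congr (_ * _%:R).
  by apply: eq_bigr => i _; rewrite Hw // UT inE.
congr nat_of_bool; by apply: eq_forallb => i; rewrite UT inE.
Qed.
Lemma keyK (mu' : {ffun X -> R}) (m : nat) n :
  forall (w : 'I_n -> {ffun X -> R}) (U : {set 'I_n}) f g h,
  (forall i, is_distr (w i)) -> (forall i, i \in U -> w i = mu') -> (m <= #|U|)%N ->
  gwin w U f g h <= xor_val mu' t m.
Proof.
elim: n => [|n IH] w U f g h Hw HU Hm.
  have m0 : m = 0%N by move: (max_card U); rewrite card_ord; lia.
  by subst m; apply: gwin_base.
have [Hmn|Hmn] := leqP m n; last first.
  have -> : m = n.+1 by move: (max_card U); rewrite card_ord; lia.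
  by apply: gwin_base => //; lia.
have [U' [i0 [sub [ni0 cU']]]] : exists (U' : {set 'I_n.+1}) (i0 : 'I_n.+1),
    U' \subset U /\ i0 \notin U' /\ (m <= #|U'|)%N.
  case: (pickP (fun i => i \notin U)) => [i0 Hi0|Hall].
    by exists U, i0; split => //; exact: subxx.
  have UT : U = finset.setT by apply/setP => i; rewrite inE; move: (Hall i) => /negbFE.
  exists (U :\ ord0), ord0; split; first exact: subsetDl.
  split; first by rewrite setD11.
  move: (cardsD1 ord0 U); rewrite {1}UT cardsT card_ord UT inE /=.
  set k := #|_ :\ _| => E; lia.
apply: le_trans (gwin_mono f g h Hw sub) _.
rewrite (gwin_ins _ _ _ _ ni0).
apply: le_trans (_ : \sum_(x : X) w i0 x * xor_val mu' t m <= _).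
  apply: ler_sum => x _; apply: ler_wpM2l; first exact: (Hw i0).1.
  apply: IH.
  - by move=> j; exact: Hw.
  - by move=> j; rewrite inE => Hj; apply: HU; exact: (fintype.subsetP sub).
  - by rewrite card_lift.
by rewrite -mulr_suml (Hw i0).2 mul1r.
Qed.
Definition cb n (delta : R) (b : {ffun 'I_n -> bool}) :=
  \prod_(i < n) (if b i then delta else 1 - delta).
Definition wb (mu' nu : {ffun X -> R}) n (b : {ffun 'I_n -> bool}) (i : 'I_n) :=
  if b i then mu' else nu.

Lemma expand (mu' nu : {ffun X -> R}) delta n (f : {ffun n.-tuple S -> n.-tuple A})
  (g : {ffun n.-tuple G -> n.-tuple A}) (h : {ffun n.-tuple P -> n.-tuple A}) :
  xor_win_prob [ffun q => delta * mu' q + (1 - delta) * nu q] t f g h =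
  \sum_(b : {ffun 'I_n -> bool}) cb delta b * gwin (wb mu' nu b) finset.setT f g h.
Proof.
rewrite /xor_win_prob /gwin.
rewrite (eq_bigr (fun q => \sum_(b : {ffun 'I_n -> bool}) cb delta b *
   (\prod_(i < n) wb mu' nu b i (tnth q i) *
     ([forall i, (i \in finset.setT) ==> win f g h q i])%:R))).
  by rewrite exchange_big; apply: eq_bigr => b _; rewrite mulr_sumr.
move=> q _.
rewrite (eq_bigr (fun i => \sum_(j : bool) (if j then delta * mu' (tnth q i)
                                           else (1 - delta) * nu (tnth q i)))); last first.
  by move=> i _; rewrite big_bool ffunE.
rewrite bigA_distr_bigA mulr_suml; apply: eq_bigr => b _.
rewrite mulrA -big_split /=; congr (_ * _%:R).
  by apply: eq_bigr => i _; rewrite /wb; case: (b i).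
by congr nat_of_bool; apply: eq_forallb => i; rewrite inE.
Qed.

Lemma sum_cb n (delta : R) : \sum_(b : {ffun 'I_n -> bool}) cb delta b = 1.
Proof.
rewrite /cb -(bigA_distr_bigA (fun (i : 'I_n) (j : bool) => if j then delta else 1 - delta)).
by rewrite big1 // => i _; rewrite big_bool /=; lra.
Qed.

Lemma sum_cb_half n (delta : R) :
  \sum_(b : {ffun 'I_n -> bool}) cb delta b * (2^-1) ^+ #|[set i | b i]| = (1 - delta / 2) ^+ n.
Proof.
rewrite (eq_bigr (fun b : {ffun 'I_n -> bool} => \prod_(i < n) (if b i then delta / 2 else 1 - delta))); last first.
  move=> b _; rewrite -prodr_const big_mkcond /cb -big_split /=.
  by apply: eq_bigr => i _; rewrite inE; case: (b i); rewrite ?mulr1.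
rewrite -(bigA_distr_bigA (fun (i : 'I_n) (j : bool) => if j then delta / 2 else 1 - delta)).
rewrite (eq_bigr (fun _ => 1 - delta / 2)); last by move=> i _; rewrite big_bool /=; lra.
by rewrite prodr_const card_ord.
Qed.
Lemma main_bound (mu' nu : {ffun X -> R}) (delta : R) (m n : nat)
  (f : {ffun n.-tuple S -> n.-tuple A})
  (g : {ffun n.-tuple G -> n.-tuple A}) (h : {ffun n.-tuple P -> n.-tuple A}) :
  is_distr mu' -> is_distr nu -> 0 <= delta <= 1 ->
  xor_win_prob [ffun q => delta * mu' q + (1 - delta) * nu q] t f g h <=
  xor_val mu' t m + 2 ^+ m * (1 - delta / 2) ^+ n.
Proof.
move=> Hmu Hnu /andP[d0 d1].
have Hw : forall b : {ffun 'I_n -> bool}, forall i, is_distr (wb mu' nu b i).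
  by move=> b i; rewrite /wb; case: (b i).
have V0 : 0 <= xor_val mu' t m by exact: bigmax_ge0.
rewrite expand.
apply: le_trans (_ : \sum_(b : {ffun 'I_n -> bool})
   (cb delta b * xor_val mu' t m + 2 ^+ m * (cb delta b * (2^-1) ^+ #|[set i | b i]|)) <= _).
  apply: ler_sum => b _.
  have c0 : 0 <= cb delta b.
    by apply: prodr_ge0 => i _; case: (b i); lra.
  have e0 : 0 <= 2 ^+ m * (cb delta b * (2^-1) ^+ #|[set i | b i]|) :> R.
    by apply: mulr_ge0; [exact: exprn_ge0 | apply: mulr_ge0 => //; apply: exprn_ge0; lra].
  case: (leqP m #|[set i | b i]|) => Hb.
    rewrite -[X in X <= _]addr0; apply: lerD => //; apply: ler_wpM2l => //.
    apply: le_trans (gwin_mono f g h (Hw b) (finset.subsetT [set i | b i])) _.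
    apply: keyK => // i; rewrite inE /wb => ->.
    done.
  rewrite -[X in X <= _]add0r; apply: lerD; first exact: mulr_ge0.
  rewrite mulrCA; apply: ler_wpM2l => //.
  apply: le_trans (gwin_le1 _ _ _ _ (Hw b)) _.
  set k := #|_| in Hb *.
  rewrite -(subnK (ltnW Hb)) exprD -mulrA -exprMn divff ?expr1n ?mulr1; last by [].
  by apply: exprn_ege1; rewrite ler1n.
rewrite big_split /= -mulr_suml sum_cb mul1r -mulr_sumr sum_cb_half.
done.
Qed.
End Game.

Lemma ln2_le (R : realType) : ln (2 : R) <= 5 / 6.
Proof.
have h1 := expR_ge1Dx (5 / 12 : R).
have h2 : expR (5 / 6 : R) = expR (5 / 12) ^+ 2.
  by rewrite -expRM_natl; congr expR; lra.
have h3 : (2 : R) <= expR (5 / 6).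
  rewrite h2; nra.
rewrite -[X in _ <= X](expRK (5 / 6 : R)) ler_ln // ?posrE ?expR_gt0 //.
Qed.

Lemma pow2E (R : realType) (x : R) : 2 `^ x = expR (x * ln 2).
Proof. by rewrite /powR pnatr_eq0. Qed.

Lemma arith (R : realType) (delta : R) n : 0 < delta <= 1 ->
  2 ^+ (Num.truncn (delta * n%:R / 2)) * (1 - delta / 2) ^+ n <=
  2 `^ (- (10^-1 * delta * n%:R)).
Proof.
move=> /andP[d0 d1].
set y := delta * n%:R.
have y0 : 0 <= y by apply: mulr_ge0 => //; lra.
have Hm : (Num.truncn (y / 2))%:R <= y / 2 by rewrite truncn_le; lra.
have e1 : (2 : R) ^+ (Num.truncn (y / 2)) <= expR (y / 2 * ln 2).
  rewrite -powR_mulrn // -pow2E; apply: ler_powR => //; lra.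
have e3 : (1 - delta / 2) ^+ n <= expR (- (y / 2)).
  have -> : - (y / 2) = n%:R * (- (delta / 2)) by rewrite /y; lra.
  rewrite expRM_natl; apply: lerXn2r; rewrite ?nnegrE ?expR_ge0 //; first lra.
  by have := expR_ge1Dx (- (delta / 2)); lra.
apply: le_trans (_ : expR (y / 2 * ln 2) * expR (- (y / 2)) <= _).
  apply: ler_pM => //; try exact: exprn_ge0; apply: exprn_ge0; lra.
rewrite -expRD pow2E ler_expR.
have L := ln2_le R.
have -> : - (10^-1 * delta * n%:R) = - (10^-1 * y) by rewrite /y mulrA.
nra.
Qed.

Theorem lemma2p5 :
  exists c : rat, 0 < c /\
  forall (R : realType) (S G P : finType) (A : finZmodType)
         (mu' nu : {ffun S * G * P -> R}) (delta : R) (t : S * G * P -> A) (n : nat),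
    is_distr mu' -> is_distr nu -> 0 < delta -> delta <= 1 ->
    let mu := [ffun q => delta * mu' q + (1 - delta) * nu q] in
    xor_val mu t n <=
      xor_val mu' t (Num.truncn (delta * n%:R / 2))
      + (2 : R) `^ (- (ratr c * delta * n%:R)).
Proof.
exists (10%:R)^-1; split; first by rewrite invr_gt0 ltr0n.
move=> R S G P A mu' nu delta t n Hmu Hnu d0 d1; cbv zeta.
set mu := [ffun q => _].
have Hr : ratr ((10%:R)^-1 : rat) = (10^-1 : R) by rewrite fmorphV rmorph_nat.
rewrite Hr.
set m := Num.truncn _.
set B := _ + _.
have B0 : 0 <= B by apply: addr_ge0; [exact: bigmax_ge0 | exact: powR_ge0].
have HB : forall (f : {ffun n.-tuple S -> n.-tuple A}) (g : {ffun n.-tuple G -> n.-tuple A})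
   (h : {ffun n.-tuple P -> n.-tuple A}), xor_win_prob mu t f g h <= B.
  move=> f g h; apply: le_trans (main_bound t m f g h Hmu Hnu _) _.
    by apply/andP; split => //; lra.
  by apply: lerD => //; apply: arith; apply/andP.
apply: bigmax_le => // f; apply: bigmax_le => // g; apply: bigmax_le => // h.
Qed.
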